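(* As formal power series in $t$, $$\sum_{n\ge0}R_{1,n}t^n=\frac{\sum_{j=0}^{r}(-1)^j d_j t^j}{\sum_{j=0}^{r+1}(-1)^j c_j t^j},\qquad d_j=\sum_{i=0}^{j}(-1)^{j-i}c_i\,R_{1,j-i}.$$
   Context: Fix $r\ge1$, $I_r=\{1,\dots,r\}$. Let $R_{1,0},\dots,R_{r,0},R_{1,1},\dots,R_{r,1}$ be algebraically independent indeterminates over $\mathbb Q$ and $(R_{\alpha,n})_{0\le\alpha\le r+1,n\in\mathbb Z}$ the $A_r$ $Q$-system: the unique family of nonzero elements of $\mathbb Q(R_{1,0},\dots,R_{r,1})$ with these initial values, $R_{0,n}=R_{r+1,n}=1$, and $R_{\alpha,n+1}R_{\alpha,n-1}=R_{\alpha,n}^2+R_{\alpha+1,n}R_{\alpha-1,n}$ ($\alpha\in I_r$, $n\in\mathbb Z$). For $k\in\{0,\dots,r+1\}$, $c_k$ is the determinant of the matrix obtained from $(R_{1,n+i+j-r-3})_{1\le i,j\le r+2}$ by deleting row $r+2$ and column $r+2-k$ (independent of $n$; $c_0=c_{r+1}=1$). *)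

(* Defs.v *)
From HB Require Import structures.
From mathcomp Require Import all_boot all_order all_algebra.
Set Implicit Arguments. Unset Strict Implicit. Unset Printing Implicit Defensive.
Import Order.TTheory GRing.Theory Num.Theory.
Local Open Scope ring_scope.

(* Polynomial ring over Q in n indeterminates, built as iterated univariate
   polynomial rings: mpoly 0 = rat, mpoly (m+1) = (mpoly m)[X_m]. *)
Fixpoint mpoly (n : nat) : idomainType :=
  if n is m.+1 then ({poly mpoly m} : idomainType) else (rat : idomainType).

Fixpoint mvar (n : nat) : nat -> mpoly n :=
  match n return nat -> mpoly n with
  | 0 => fun _ => 0
  | m.+1 => fun i => if i == m then ('X : {poly mpoly m}) else (mvar m i)%:P
  end.

(* The field Q(R_{1,0},...,R_{r,0},R_{1,1},...,R_{r,1}) of rational functions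
   in 2r algebraically independent indeterminates. *)
Definition QF (r : nat) : fieldType := {fraction (mpoly (r + r))}.

Definition QX (r : nat) (i : nat) : QF r := @tofrac (mpoly (r + r)) (mvar (r + r) i).

(* c_k = det of (R_{1, m+i+j-r-3})_{1<=i,j<=r+2} with row r+2 and column
   r+2-k deleted.  0-based indices i',j' : 'I_(r+2) correspond to i'+1, j'+1,
   and column r+2-k (1-based) is 0-based column r+1-k = rev_ord k. *)
Definition cdet (F : comNzRingType) (r : nat) (R1 : int -> F) (m : int)
    (k : 'I_r.+2) : F :=
  \det (col' (rev_ord k) (row' ord_max
     (\matrix_(i < r.+2, j < r.+2)
        R1 (m + (i : nat)%:Z + (j : nat)%:Z - (r : nat)%:Z - 1)%R))).

Definition cc (F : comNzRingType) (r : nat) (R1 : int -> F) (m : int) (k : nat) : F :=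
  if (k <= r.+1)%N then @cdet F r R1 m (inord k) else 0.

Definition dd (F : comNzRingType) (r : nat) (R1 : int -> F) (m : int) (j : nat) : F :=
  \sum_(i < j.+1) (-1) ^+ (j - i) * @cc F r R1 m i * R1 (j - i)%N%:Z.

(* Main.v *)
Require Import Defs.
From mathcomp Require Import all_boot all_order all_algebra all_fingroup.
From mathcomp Require Import zify ring.
Set Implicit Arguments. Unset Strict Implicit. Unset Printing Implicit Defensive.
Import Order.TTheory GRing.Theory Num.Theory.
Local Open Scope ring_scope.

Lemma jacobi_aux (F : comNzRingType) k (A : 'M[F]_(2 + k)) :
  \det A * \det (ulsubmx (\adj A)) = \det A ^+ 2 * \det (drsubmx A).
Proof.
set B := \adj A.
pose X : 'M[F]_(2 + k) := block_mx (ulsubmx B) 0 (dlsubmx B) 1%:M.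
have hAB := mul_mx_adj A.
rewrite -[A in A *m _]submxK -[B in _ *m B]submxK mulmx_block
   (scalar_mx_block 2 k) in hAB.
case/eq_block_mx: hAB => h1 _ h3 _.
have hAX : A *m X = block_mx (\det A)%:M (ursubmx A) 0 (drsubmx A).
  rewrite -[A in A *m _]submxK mulmx_block h1 h3 !mulmx0 !mulmx1.
  by rewrite !add0r.
have := det_mulmx A X.
rewrite hAX det_ublock det_scalar /X det_lblock det1 mulr1 => ->.
by [].
Qed.

Lemma jacobi (F : fieldType) k (A : 'M[F]_(2 + k)) :
  \det (ulsubmx (\adj A)) = \det A * \det (drsubmx A).
Proof.
suff H : forall A : 'M[F]_(2 + k),
  \det (ulsubmx (\adj (- A))) = \det (- A) * \det (drsubmx (- A)).
  by have := H (- A); rewrite opprK.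
move=> {}A.
pose P := char_poly_mx A.
have hP : \det P != 0 by apply: monic_neq0; apply: char_poly_monic.
have := jacobi_aux P; rewrite expr2 -mulrA => /(mulfI hP) hJ.
have hmap : map_mx (horner_eval 0) P = - A.
  apply/matrixP => i j; rewrite !mxE /=.
  by rewrite horner_evalE hornerD hornerN hornerC hornerMn hornerX mul0rn sub0r.
have := congr1 (horner_eval 0) hJ.
rewrite rmorphM /= -!det_map_mx map_ulsubmx map_drsubmx map_mx_adj hmap.
by [].
Qed.
Lemma det_rowperm (F : comNzRingType) n (s : 'S_n) (A : 'M[F]_n) :
  \det (row_perm s A) = (-1) ^+ s * \det A.
Proof. by rewrite row_permE det_mulmx det_perm. Qed.

Lemma det_colperm (F : comNzRingType) n (s : 'S_n) (A : 'M[F]_n) :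
  \det (col_perm s A) = (-1) ^+ s * \det A.
Proof. by rewrite col_permE det_mulmx det_perm odd_permV mulrC. Qed.

Lemma det_conjperm (F : comNzRingType) n (s : 'S_n) (A : 'M[F]_n) :
  \det (row_perm s (col_perm s A)) = \det A.
Proof.
by rewrite det_rowperm det_colperm mulrA -signr_addb addbb mul1r.
Qed.

Lemma det_mx22 (F : comNzRingType) (A : 'M[F]_2) :
  \det A = A 0 0 * A 1 1 - A 0 1 * A 1 0.
Proof.
rewrite (expand_det_row _ 0) !big_ord_recl big_ord0 addr0 /cofactor !det_mx11.
have e1 : lift 0 0 = 1 :> 'I_2 by apply/val_inj.
have e2 : lift (lift ord0 ord0) 0 = 0 :> 'I_2 by apply/val_inj.
have e3 : lift ord0 ord0 = 1 :> 'I_2 by apply/val_inj.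
rewrite /= expr0 expr1 mul1r mulN1r mulrN.
rewrite !mxE e3.
by have -> : lift 1 0 = 0 :> 'I_2 by apply/val_inj.
Qed.

Lemma ord_predE n (i : 'I_n) : val (ord_pred i) = if val i == 0%N then n.-1 else (val i).-1.
Proof.
case: i => i hi /=.
case: n hi => // n hi.
case: i hi => [|i] hi /=.
  by rewrite modn_small.
by rewrite modnDr modn_small // ltnW.
Qed.

Definition hank (F : comNzRingType) (a : int -> F) (k : nat) (s : int) : 'M[F]_k :=
  \matrix_(i, j) a (s + (i : nat)%:Z + (j : nat)%:Z).
Definition Hd (F : comNzRingType) (a : int -> F) (k : nat) (s : int) : F :=
  \det (hank a k s).

Lemma L1 k (p : 'I_k.+1) : val (ord_pred (lift (lshift k (0 : 'I_2)) p : 'I_(2 + k))) = nat_of_ord p.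
Proof. by rewrite ord_predE /= /bump /=. Qed.

Lemma L2 k (p : 'I_k.+1) :
  val (ord_pred (lift (lshift k (1 : 'I_2)) p : 'I_(2 + k))) = (nat_of_ord (ord_pred p)).+1.
Proof.
rewrite !ord_predE /= /bump /=.
case: p => [[|p] hp] //=.
Qed.

Lemma L3 k (p : 'I_k) : val (ord_pred (rshift 2 p : 'I_(2 + k))) = (nat_of_ord p).+1.
Proof. by rewrite ord_predE /=. Qed.

Lemma DJ (F : fieldType) (a : int -> F) k s :
  Hd a k.+2 s * Hd a k (s + 2) =
  Hd a k.+1 s * Hd a k.+1 (s + 2) - Hd a k.+1 (s + 1) ^+ 2.
Proof.
pose sg := perm (@ord_pred_inj (2 + k)).
pose tau := perm (@ord_pred_inj k.+1).
pose A' : 'M[F]_(2 + k) := row_perm sg (col_perm sg (hank a (2 + k) s)).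
have hA : \det A' = Hd a k.+2 s by rewrite det_conjperm.
have J := jacobi A'.
rewrite det_mx22 !mxE in J.
have e00 : row' (lshift k 0) (col' (lshift k 0) A') = hank a k.+1 s.
  apply/matrixP => p q; rewrite !mxE !permE L1 L1. by [].
have e11 : row' (lshift k 1) (col' (lshift k 1) A') =
    row_perm tau (col_perm tau (hank a k.+1 (s + 2))).
  apply/matrixP => p q; rewrite !mxE !permE L2 L2; congr (a _); lia.
have e01 : row' (lshift k 0) (col' (lshift k 1) A') =
    col_perm tau (hank a k.+1 (s + 1)).
  apply/matrixP => p q; rewrite !mxE !permE L1 L2; congr (a _); lia.
have e10 : row' (lshift k 1) (col' (lshift k 0) A') =
    row_perm tau (hank a k.+1 (s + 1)).
  apply/matrixP => p q; rewrite !mxE !permE L2 L1; congr (a _); lia.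
have ed : drsubmx A' = hank a k (s + 2).
  apply/matrixP => p q; rewrite !mxE !permE L3 L3; congr (a _); lia.
move: J; rewrite /cofactor e00 e11 e01 e10 ed hA det_conjperm det_colperm det_rowperm.
rewrite /Hd => <- /=.
have ht : ((-1) ^+ tau * (-1) ^+ tau : F) = 1 by rewrite -signr_addb addbb.
have -> : (1 %% 2 = 1)%N by [].
have -> : ((-1) ^+ (1 + 1) : F) = 1 by rewrite exprD expr1 mulN1r opprK.
rewrite add0n addn0 expr1 !mul1r !mulN1r mulrN mulNr opprK mulrACA ht mul1r expr2.
by [].
Qed.

Definition ww (F : comNzRingType) (a : int -> F) r (s : int) (j : 'I_r.+2) : F :=
  (-1) ^+ j * \det (col' j (row' ord_max (hank a r.+2 s))).
Arguments ww {F} a r s j.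

Lemma kern_a (F : fieldType) (a : int -> F) r
  (hz : forall s, Hd a r.+2 s = 0) s (i : nat) : (i <= r.+1)%N ->
  \sum_(j < r.+2) ww a r s j * a (s + i%:Z + (j : nat)%:Z) = 0.
Proof.
move=> hi.
pose M : 'M[F]_r.+2 := \matrix_(p, q)
  (if p == ord_max then a (s + i%:Z + (q : nat)%:Z) else a (s + (p : nat)%:Z + (q : nat)%:Z)).
have hM : \det M = 0.
  have [hir|hir] := boolP (i == r.+1).
    rewrite -(hz s); congr (\det _); apply/matrixP => p q; rewrite !mxE.
    case: eqP => [->|//]; by rewrite (eqP hir).
  have hi' : (i < r.+2)%N by rewrite ltnS.
  apply: (@determinant_alternate _ _ _ (Ordinal hi') ord_max).
    by rewrite -(inj_eq val_inj) /= ltn_eqF // ltn_neqAle hir.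
  move=> q; rewrite !mxE eqxx.
  have -> : (Ordinal hi' == ord_max) = false.
    by rewrite -(inj_eq val_inj) /= ltn_eqF // ltn_neqAle hir.
  by [].
move: hM; rewrite (expand_det_row _ ord_max).
under eq_bigr => j _ do rewrite /cofactor mxE eqxx.
have hdet : forall j : 'I_r.+2, \det (row' ord_max (col' j M)) =
    \det (col' j (row' ord_max (hank a r.+2 s))).
  move=> j; congr (\det _); apply/matrixP => p q; rewrite !mxE.
  by rewrite eq_sym (negbTE (neq_lift _ _)).
under eq_bigr => j _ do rewrite hdet.
move=> h.
have : (-1) ^+ r.+1 * \sum_(j < r.+2) ww a r s j * a (s + i%:Z + (j : nat)%:Z) = 0.
  rewrite big_distrr /= -[RHS]h; apply: eq_bigr => j _.
  rewrite /ww exprD /=; ring.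
by move/eqP; rewrite mulf_eq0 signr_eq0 /= => /eqP.
Qed.

Lemma ww_last (F : comNzRingType) (a : int -> F) r s :
  ww a r s ord_max = (-1) ^+ r.+1 * Hd a r.+1 s.
Proof.
rewrite /ww /Hd; congr (_ * \det _); apply/matrixP => p q; rewrite !mxE.
have hl : forall p : 'I_r.+1, ((lift ord_max p : 'I_r.+2) : nat) = p.
  by move=> p'; rewrite /= /bump leqNgt ltn_ord.
by rewrite !hl.
Qed.

Lemma kern_b (F : fieldType) (a : int -> F) r
  (hz : forall s, Hd a r.+2 s = 0) (h1 : forall s, Hd a r.+1 s = 1) s j :
  ww a r s j = ww a r (s + 1) j.
Proof.
pose d j := ww a r s j - ww a r (s + 1) j.
have dl : d ord_max = 0 by rewrite /d !ww_last !h1 subrr.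
have hsum : forall i : 'I_r.+1,
    \sum_(j < r.+2) d j * a ((s + 1) + (i : nat)%:Z + (j : nat)%:Z) = 0.
  move=> i.
  have e1 := kern_a hz s (ltn_ord i).
  have e2 := kern_a hz (s + 1) (ltnW (ltn_ord i)).
  rewrite /d; under eq_bigr => k _ do rewrite mulrBl.
  rewrite sumrB e2 subr0 -[RHS]e1; apply: eq_bigr => k _.
  congr (_ * a _); lia.
pose v : 'cV[F]_r.+1 := \col_j d (widen_ord (leqnSn _) j).
have hv : hank a r.+1 (s + 1) *m v = 0.
  apply/matrixP => i z; rewrite !mxE -[RHS](hsum i) [RHS]big_ord_recr /= dl mul0r addr0.
  by apply: eq_bigr => k _; rewrite !mxE mulrC.
have hu : hank a r.+1 (s + 1) \in unitmx by rewrite unitmxE [\det _]h1 unitr1.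
have v0 : v = 0 by rewrite -(mulKmx hu v) hv mulmx0.
apply/eqP; rewrite -subr_eq0; apply/eqP.
have [hj|hj] := ltnP j r.+1.
  have := congr1 (fun M : 'cV_r.+1 => M (Ordinal hj) 0) v0.
  rewrite !mxE /d => <-; congr (_ - _); congr (ww _ _ _ _); exact: val_inj.
have -> : j = ord_max by apply: val_inj; apply/eqP; rewrite eqn_leq hj -ltnS ltn_ord.
exact: dl.
Qed.

Lemma kern_c (F : fieldType) (a : int -> F) r
  (hz : forall s, Hd a r.+2 s = 0) (h1 : forall s, Hd a r.+1 s = 1) s j :
  ww a r s j = ww a r 0 j.
Proof.
have hb := kern_b hz h1.
have hp : forall n : nat, ww a r n%:Z j = ww a r 0 j.
  elim => [//|n IH]; rewrite -IH (hb n); congr (ww _ _ _ _); lia.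
have hn : forall n : nat, ww a r (- n%:Z) j = ww a r 0 j.
  elim => [//|n IH]; rewrite -IH (hb (- n.+1%:Z)); congr (ww _ _ _ _); lia.
by case: s => n; [exact: hp | rewrite NegzE; exact: hn].
Qed.

Lemma kern_main (F : fieldType) (a : int -> F) r
  (hz : forall s, Hd a r.+2 s = 0) (h1 : forall s, Hd a r.+1 s = 1) s t :
  \sum_(j < r.+2) ww a r s j * a (t + (j : nat)%:Z) = 0.
Proof.
rewrite -[RHS](kern_a hz t (leq0n r.+1)); apply: eq_bigr => j _.
rewrite (kern_c hz h1 s) (kern_c hz h1 t) addr0.
by [].
Qed.

Lemma qsys_hank (F : fieldType) r (R : nat -> int -> F)
  (h0 : forall n, R 0%N n = 1) (hr1 : forall n, R r.+1 n = 1)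
  (hq : forall a n, (1 <= a <= r)%N ->
     R a (n + 1) * R a (n - 1) = R a n ^+ 2 + R a.+1 n * R a.-1 n)
  (hnz : forall a n, (a <= r.+1)%N -> R a n != 0) :
  (forall s, Hd (R 1%N) r.+2 s = 0) /\ (forall s, Hd (R 1%N) r.+1 s = 1).
Proof.
set a := R 1%N.
have key : forall k, (k.+1 <= r.+1)%N ->
    (forall N, Hd a k (N - k%:Z + 1) = R k N) /\
    (forall N, Hd a k.+1 (N - k.+1%:Z + 1) = R k.+1 N).
  elim => [_|k IH hk].
    split => N; first by rewrite /Hd det_mx00 h0.
    rewrite /Hd det_mx11 mxE /a; congr (R _ _); by rewrite !addr0 subrK.
  have [IH0 IH1] := IH (ltnW hk).
  split => // N.
  have D := DJ a k (N - k.+1%:Z).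
  have e1 : Hd a k (N - k.+1%:Z + 2) = R k N by rewrite -IH0; congr (Hd _ _ _); lia.
  have e2 : Hd a k.+1 (N - k.+1%:Z) = R k.+1 (N - 1).
    by rewrite -IH1; congr (Hd _ _ _); lia.
  have e3 : Hd a k.+1 (N - k.+1%:Z + 2) = R k.+1 (N + 1).
    by rewrite -IH1; congr (Hd _ _ _); lia.
  have e4 : Hd a k.+1 (N - k.+1%:Z + 1) = R k.+1 N by rewrite IH1.
  rewrite e1 e2 e3 e4 in D.
  have Q := hq k.+1 N hk.
  have hk0 : (k <= r.+1)%N by apply: leq_trans (leqnSn _) (ltnW hk).
  apply: (mulIf (hnz k N hk0)).
  have -> : N - k.+2%:Z + 1 = N - k.+1%:Z by lia.
  rewrite D mulrC Q /=; ring.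
have [K0 K1] := key r (leqnn _).
split => s.
  have D := DJ a r s.
  have e1 : Hd a r (s + 2) = R r (s + r.+1%:Z) by rewrite -K0; congr (Hd _ _ _); lia.
  have e2 : Hd a r.+1 s = R r.+1 (s + r) by rewrite -K1; congr (Hd _ _ _); lia.
  have e3 : Hd a r.+1 (s + 2) = R r.+1 (s + 2 + r) by rewrite -K1; congr (Hd _ _ _); lia.
  have e4 : Hd a r.+1 (s + 1) = R r.+1 (s + 1 + r) by rewrite -K1; congr (Hd _ _ _); lia.
  rewrite e1 e2 e3 e4 !hr1 expr1n mulr1 subrr in D.
  move/eqP: D; rewrite mulf_eq0 (negbTE (hnz _ _ (leqnSn r))) orbF.
  by move/eqP.
by rewrite -(hr1 (s + r)) -K1; congr (Hd _ _ _); lia.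
Qed.

Lemma sign_sq (F : comNzRingType) (k : nat) : ((-1) ^+ k * (-1) ^+ k : F) = 1.
Proof. by rewrite -exprD addnn -mul2n exprM expr2 mulN1r opprK expr1n. Qed.

Unset Implicit Arguments.

Theorem mainTheorem7 (r : nat) (hr : (0 < r)%N) (R : nat -> int -> QF r) :
  (forall n, R 0%N n = 1) ->
  (forall n, R r.+1 n = 1) ->
  (forall a : 'I_r, R a.+1 0 = QX r a) ->
  (forall a : 'I_r, R a.+1 1 = QX r (r + a)) ->
  (forall a n, (1 <= a <= r)%N ->
     R a (n + 1) * R a (n - 1) = R a n ^+ 2 + R a.+1 n * R a.-1 n) ->
  (forall a n, (a <= r.+1)%N -> R a n != 0) ->
  forall (m : int) (n : nat),
    \sum_(j < n.+1) (-1) ^+ j * @cc (QF r) r (R 1%N) m j * R 1%N (n - j)%N%:Z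
    = (if (n <= r)%N then (-1) ^+ n * @dd (QF r) r (R 1%N) m n else 0).
Proof.
move=> h0 hr1 _ _ hq hnz m n.
have [hz h1] := qsys_hank h0 hr1 hq hnz.
case: (leqP n r) => hn.
  rewrite /dd big_distrr /=; apply: eq_bigr => j _.
  have hj : (j <= n)%N by rewrite -ltnS ltn_ord.
  have -> : ((-1) ^+ n : QF r) = (-1) ^+ (n - j) * (-1) ^+ j.
    by rewrite -exprD subnK.
  have hu := sign_sq (QF r) (n - j).
  transitivity (((-1) ^+ (n - j) * (-1) ^+ (n - j)) *
     ((-1) ^+ j * cc r (R 1%N) m j * R 1%N (n - j)%N%:Z)).
    by rewrite hu mul1r.
  ring.
have hle : (r.+2 <= n.+1)%N by [].
rewrite (bigID (fun j : 'I_n.+1 => (j < r.+2)%N)) /=.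
rewrite [X in _ + X]big1 ?addr0; last first.
  move=> j hj; rewrite /cc -ltnS.
  by rewrite (negbTE hj) mulr0 mul0r.
rewrite -(big_ord_widen _ (fun j => (-1) ^+ j * cc r (R 1%N) m j * R 1%N (n - j)%N%:Z) hle).
rewrite (reindex_inj rev_ord_inj) /=.
pose s := m - r%:Z - 1.
pose t := n%:Z - r%:Z - 1.
have hM : (\matrix_(i < r.+2, j < r.+2) R 1%N (m + (i : nat)%:Z + (j : nat)%:Z - (r : nat)%:Z - 1))
    = hank (R 1%N) r.+2 s.
  by apply/matrixP => p q; rewrite !mxE; congr (R _ _); rewrite /s; lia.
transitivity ((-1) ^+ r.+1 * \sum_(j < r.+2) ww (R 1%N) r s j * R 1%N (t + (j : nat)%:Z)).
  rewrite big_distrr /=; apply: eq_bigr => j _.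
  have hj : (j <= r.+1)%N by rewrite -ltnS ltn_ord.
  have hc : (r.+2 - j.+1 <= r.+1)%N by rewrite subSS leq_subr.
  rewrite /cc hc.
  have -> : (inord (r.+2 - j.+1) : 'I_r.+2) = rev_ord j.
    by apply/val_inj; rewrite /= inordK // rev_ord_proof.
  rewrite /cdet rev_ordK hM /ww.
  have -> : (n - (r.+2 - j.+1))%N%:Z = t + (j : nat)%:Z by rewrite /t; lia.
  have -> : ((-1) ^+ (r.+2 - j.+1) : QF r) = (-1) ^+ r.+1 * (-1) ^+ j.
    have -> : ((-1) ^+ r.+1 : QF r) = (-1) ^+ (r.+1 - j) * (-1) ^+ j.
      by rewrite -exprD subnK.
    by rewrite subSS -mulrA sign_sq mulr1.
  ring.
by rewrite kern_main ?mulr0.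
Qed.
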